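(* (i) If $\mathbf p=\{p_1,\dots,p_n\}$ is an admissible tuple and $\mathsf P=[\partial_{c[j]}p_i]_{1\le i,j\le n}$, then $\partial_k(\mathsf P)=\gamma_k(\mathsf P)$ for all $k=1,\dots,n-1$. (ii) Conversely, let $\mathsf Q=[q_{ij}]\in\mathrm{Mat}(n,\mathbb Q[\mathbf x])$ be invertible, with each $q_{ij}$ homogeneous of degree $j-i$ (so $q_{ij}=0$ if $j<i$), and with $\partial_k(\mathsf Q)=\gamma_k(\mathsf Q)$ for $k=1,\dots,n-1$. Then the tuple $\{q_{1n},\dots,q_{nn}\}$ is admissible and $q_{ij}=\partial_{c[j]}q_{in}$ for all $i,j$.
   Context: $\mathbb Q[\mathbf x]=\mathbb Q[x_1,\dots,x_n]$ with $\deg x_i=1$; $\partial_k=(1-s_k)/(x_k-x_{k+1})$ the divided difference, applied entrywise to matrices; $c[j]=s_js_{j+1}\cdots s_{n-1}$ ($c[n]=\mathrm{id}$) and $\partial_{c[j]}=\partial_j\cdots\partial_{n-1}$. A tuple $\mathbf p=\{p_1,\dots,p_n\}\subset\mathbb Q[\mathbf x]$ is admissible if each $p_j$ is symmetric in $x_1,\dots,x_{n-1}$, homogeneous of degree $n-j$, and $\partial_{c[j]}p_j\in\mathbb Q^\times$. For a matrix $A$ with $n$ columns, $\gamma_k(A)_{ij}=\delta_{j,k+1}A_{ik}$ (the $k$-th column moved to position $k+1$, other entries zero). *)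

(* Defs.v *)
(* Q[x_1..x_n] is modelled as iterated univariate polynomials:
   mpoly 0 = rat, mpoly (n+1) = {poly (mpoly n)}, the outer variable being x_{n+1}. *)
From HB Require Import structures.
From mathcomp Require Import all_boot all_order all_algebra.
From Stdlib Require Import ClassicalEpsilon.
Set Implicit Arguments. Unset Strict Implicit. Unset Printing Implicit Defensive.
Import Order.TTheory GRing.Theory Num.Theory.
Local Open Scope ring_scope.

Fixpoint mpoly (n : nat) : idomainType :=
  match n with
  | 0 => rat
  | n'.+1 => {poly (mpoly n')}
  end.

(* the variable x_i (1-based, 1 <= i <= n); 0 for out-of-range indices *)
Fixpoint mvar (n : nat) (i : nat) : mpoly n :=
  match n return mpoly n with
  | 0 => 0
  | n'.+1 => if i == n'.+1 then 'X else (mvar n' i)%:P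
  end.

Fixpoint msubst (S : comUnitRingType) (v : nat -> S) (n : nat) : mpoly n -> S :=
  match n return mpoly n -> S with
  | 0 => fun c => ratr c
  | n'.+1 => fun p : {poly (mpoly n')} => (map_poly (@msubst S v n') p).[v n'.+1]
  end.

Definition sk (n k : nat) (f : mpoly n) : mpoly n :=
  msubst (fun i => mvar n (if i == k then k.+1 else if i == k.+1 then k else i)) f.

Definition dd (n k : nat) (f : mpoly n) : mpoly n :=
  epsilon (inhabits 0)
    (fun g : mpoly n => (mvar n k - mvar n k.+1) * g = f - sk k f).

(* d_{c[j]} = d_j d_{j+1} ... d_{n-1}  (identity when j = n) *)
Definition dc (n j : nat) (f : mpoly n) : mpoly n :=
  foldr (fun k g => dd k g) f (iota j (n - j)).

(* homogeneous of total degree d (0 is homogeneous of every degree) *)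
Fixpoint homog (n : nat) : nat -> mpoly n -> bool :=
  match n return nat -> mpoly n -> bool with
  | 0 => fun d c => (d == 0)%N || (c == 0)
  | n'.+1 => fun d (p : {poly (mpoly n')}) =>
      [forall i : 'I_(size p),
        if (i <= d)%N then homog (d - i) p`_i else p`_i == 0]
  end.

Definition sym_but_last (n : nat) (f : mpoly n) : Prop :=
  forall k : nat, (1 <= k)%N -> (k.+1 <= n.-1)%N -> sk k f = f.

Definition nonzero_const (n : nat) (f : mpoly n) : Prop :=
  exists c : rat, c != 0 /\ f = ratr c.

(* admissible tuple; p i (i : 'I_n, 0-based) stands for p_{i+1} *)
Definition admissible (n : nat) (p : 'I_n -> mpoly n) : Prop :=
  forall i : 'I_n,
    [/\ sym_but_last (p i), homog (n - i.+1) (p i) & nonzero_const (dc i.+1 (p i))].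

(* A_{i,m} with 1-based column index m (0 if m is out of range) *)
Definition entry1 (R : nzRingType) (m n : nat) (A : 'M[R]_(m, n)) (i : 'I_m) (c : nat) : R :=
  \sum_(l < n | l.+1 == c) A i l.

(* gamma_k(A)_{ij} = delta_{j,k+1} A_{ik}  (paper's 1-based indices) *)
Definition gamma (R : nzRingType) (m n : nat) (k : nat) (A : 'M[R]_(m, n)) : 'M[R]_(m, n) :=
  \matrix_(i, j) (if j.+1 == k.+1 then entry1 A i k else 0).

(* Main.v *)
Require Import Defs.
From HB Require Import structures.
From mathcomp Require Import all_boot all_order all_algebra.
From mathcomp Require Import ring zify.
Import GRing.Theory.
Local Open Scope ring_scope.
Set Implicit Arguments. Unset Strict Implicit. Unset Printing Implicit Defensive.

Lemma ratr_rm n : exists rho : {rmorphism rat -> mpoly n}, True.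
Proof.
elim: n => [|n [rho _]].
  by exists idfun.
by exists ((@polyC (mpoly n)) \o rho).
Qed.

Lemma rm_ratr m (S : unitRingType) (phi : {rmorphism mpoly m -> S}) c :
  phi (ratr c) = ratr c.
Proof.
have [rho _] := ratr_rm m.
rewrite -(fmorph_eq_rat rho c).
exact: (fmorph_eq_rat (phi \o rho) c).
Qed.

Lemma msubst_rm m (v : nat -> mpoly m) n :
  exists phi : {rmorphism mpoly n -> mpoly m}, forall f, msubst v f = phi f.
Proof.
elim: n => [|n [phi ephi]].
  have [rho _] := ratr_rm m.
  by exists rho => c /=; rewrite (fmorph_eq_rat rho c).
have cfu : commr_rmorph phi (v n.+1) by move=> a; exact: mulrC.
exists (horner_morph cfu) => f /=.
by rewrite /horner_morph (eq_map_poly ephi).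
Qed.

Lemma rm_div n (S : comUnitRingType) (d : S) (phi psi : {rmorphism mpoly n -> S}) :
  (forall i, (0 < i <= n)%N -> exists g, phi (mvar n i) - psi (mvar n i) = d * g) ->
  forall f, exists g, phi f - psi f = d * g.
Proof.
elim: n phi psi => [|n IH] phi psi H f.
  exists 0; by rewrite mulr0 (fmorph_eq_rat phi) (fmorph_eq_rat psi) subrr.
have HX : exists g, phi 'X - psi 'X = d * g.
  by have := H n.+1; rewrite /= eqxx leqnn; apply.
have HC : forall c, exists g, phi c%:P - psi c%:P = d * g.
  move=> c; have := IH (phi \o polyC) (psi \o polyC); apply => //.
  move=> i /andP[i0 iN]; have := H i; rewrite /= ifN; first by apply; rewrite i0 ltnW.
  by rewrite neq_ltn ltnS iN.
move: f; change (forall f : {poly mpoly n}, exists g, phi f - psi f = d * g).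
elim/poly_ind => [|p c [g1 e1]].
  by exists 0; rewrite !rmorph0 subrr mulr0.
have [g2 e2] := HX; have [g3 e3] := HC c.
exists (g1 * phi 'X + psi p * g2 + g3).
rewrite !rmorphD !rmorphM /=.
have -> : phi p * phi 'X + phi c%:P - (psi p * psi 'X + psi c%:P)
   = (phi p - psi p) * phi 'X + psi p * (phi 'X - psi 'X) + (phi c%:P - psi c%:P) by ring.
rewrite e1 e2 e3; ring.
Qed.

Lemma rm_ext n (S : comUnitRingType) (phi psi : {rmorphism mpoly n -> S}) :
  (forall i, (0 < i <= n)%N -> phi (mvar n i) = psi (mvar n i)) ->
  forall f, phi f = psi f.
Proof.
move=> H f; have [|g] := @rm_div n S 0 phi psi _ f.
  by move=> i /H ->; exists 0; rewrite subrr mulr0.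
by rewrite mul0r => /eqP; rewrite subr_eq0 => /eqP.
Qed.

Lemma msubst_mvar m (v : nat -> mpoly m) n i :
  (0 < i <= n)%N -> msubst v (mvar n i) = v i.
Proof.
elim: n => [|n IH] /andP[i0 iN]; first by move: i0 iN; case: i.
have [phi ephi] := msubst_rm v n.
rewrite /=; case: eqP => [->|ne].
  by rewrite /= (eq_map_poly ephi) map_polyX hornerX.
rewrite /= (eq_map_poly ephi) map_polyC hornerC; apply: etrans (esym (ephi _)) _; rewrite IH // i0 /=.
by rewrite -ltnS ltn_neqAle iN andbT; apply/eqP.
Qed.

Lemma msubst_ext m (v w : nat -> mpoly m) n (f : mpoly n) :
  (forall i, (0 < i <= n)%N -> v i = w i) -> msubst v f = msubst w f.
Proof.
move=> H; have [phi ephi] := msubst_rm v n; have [psi epsi] := msubst_rm w n.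
rewrite ephi epsi; apply: rm_ext => i hi.
by rewrite -ephi -epsi !msubst_mvar // H.
Qed.

Lemma msubst_id n (f : mpoly n) : msubst (fun i => mvar n i) f = f.
Proof.
have [phi ephi] := msubst_rm (fun i => mvar n i) n.
rewrite ephi; apply: (rm_ext (psi := idfun)) => i hi.
by rewrite -ephi msubst_mvar.
Qed.

Lemma msubst_comp n (v w : nat -> mpoly n) (f : mpoly n) :
  msubst w (msubst v f) = msubst (fun i => msubst w (v i)) f.
Proof.
have [phi ephi] := msubst_rm v n; have [psi epsi] := msubst_rm w n.
have [chi echi] := msubst_rm (fun i => msubst w (v i)) n.
rewrite ephi epsi echi.
apply: (rm_ext (phi := psi \o phi)) => i hi.
by rewrite /= -ephi -epsi -echi !msubst_mvar.
Qed.

Lemma mvar_neq n a b : (0 < a <= n)%N -> (0 < b <= n)%N -> a != b ->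
  mvar n a - mvar n b != 0.
Proof.
elim: n a b => [|n IH] a b; first by case/andP=> a0; case: a a0.
wlog: a b / (a <= b)%N.
  move=> W ha hb ne; case: (leqP a b) => [le|lt]; first exact: W.
  by rewrite -opprB oppr_eq0 W // 1?eq_sym // ltnW.
move=> le /andP[a0 aN] /andP[b0 bN] ne.
have an : a != n.+1.
  apply: contra ne => /eqP e; apply/eqP; lia.
rewrite /= (negbTE an).
case: (b =P n.+1) => [eb|nb].
  by rewrite -opprB oppr_eq0 -size_poly_eq0 size_XsubC.
rewrite -polyCB polyC_eq0 IH // ?a0 ?b0 /= -ltnS ltn_neqAle ?aN ?bN ?an //.
by rewrite andbT; apply/eqP.
Qed.

From Stdlib Require Import ClassicalEpsilon.

Definition swapn (k i : nat) : nat :=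
  if i == k then k.+1 else if i == k.+1 then k else i.

Ltac noif t := lazymatch t with context[if _ then _ else _] => fail | _ => idtac end.
Ltac swap_solve := rewrite /swapn;
  repeat (match goal with |- context[if ?a == ?b then _ else _] =>
     noif a; noif b; case: (a =P b) => ? end; simpl); lia.

Lemma skE n k (f : mpoly n) : sk k f = msubst (fun i => mvar n (swapn k i)) f.
Proof. by []. Qed.

Lemma msubst_perm_comp n (s t : nat -> nat) (f : mpoly n) :
  (forall i, (0 < i <= n)%N -> (0 < t i <= n)%N) ->
  msubst (fun i => mvar n (s i)) (msubst (fun i => mvar n (t i)) f)
  = msubst (fun i => mvar n (s (t i))) f.
Proof.
move=> H; rewrite msubst_comp; apply: msubst_ext => i hi.
by rewrite msubst_mvar // H.
Qed.

Lemma swapn_range n k i : (0 < k)%N -> (k < n)%N -> (0 < i <= n)%N ->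
  (0 < swapn k i <= n)%N.
Proof. rewrite /swapn => k0 kn /andP[i0 iN]; repeat case: ifP => /eqP ?; lia. Qed.

Lemma skK n k (f : mpoly n) : (0 < k)%N -> (k < n)%N -> sk k (sk k f) = f.
Proof.
move=> k0 kn; rewrite !skE msubst_perm_comp; last by move=> i; apply: swapn_range.
rewrite -[RHS]msubst_id; apply: msubst_ext => i _; congr (mvar n _).
swap_solve.
Qed.

Lemma sk_comm n k m (f : mpoly n) : (0 < k)%N -> (k.+1 < m)%N -> (m < n)%N ->
  sk k (sk m f) = sk m (sk k f).
Proof.
move=> k0 km mn; rewrite !skE !msubst_perm_comp; first last.
- by move=> i hi; apply: swapn_range => //; lia.
- by move=> i hi; apply: swapn_range => //; lia.
apply: msubst_ext => i _; congr (mvar n _).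
swap_solve.
Qed.

Lemma sk_braid n j (f : mpoly n) : (0 < j)%N -> (j.+2 <= n)%N ->
  sk j (sk j.+1 (sk j f)) = sk j.+1 (sk j (sk j.+1 f)).
Proof.
move=> j0 jn; rewrite !skE !msubst_perm_comp; first last.
- by move=> i hi; apply: swapn_range => //; lia.
- by move=> i hi; apply: swapn_range => //; try lia; apply: swapn_range => //; lia.
- by move=> i hi; apply: swapn_range => //; lia.
- by move=> i hi; apply: swapn_range => //; try lia; apply: swapn_range => //; lia.
apply: msubst_ext => i _; congr (mvar n _).
swap_solve.
Qed.

Lemma sk_mvar n k i : (0 < i <= n)%N -> sk k (mvar n i) = mvar n (swapn k i).
Proof. by move=> hi; rewrite skE msubst_mvar. Qed.

Lemma sk_rm n k : exists phi : {rmorphism mpoly n -> mpoly n}, forall f, sk k f = phi f.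
Proof. exact: msubst_rm. Qed.

Lemma dd_spec n k (f : mpoly n) : (0 < k)%N -> (k < n)%N ->
  (mvar n k - mvar n k.+1) * dd k f = f - sk k f.
Proof.
move=> k0 kn; rewrite /dd.
apply: (epsilon_spec (inhabits 0) (fun g : mpoly n => _ * g = _)).
have [phi ephi] := sk_rm n k.
have [|g eg] := @rm_div n (mpoly n) (mvar n k - mvar n k.+1) idfun phi _ f.
  move=> i hi /=; rewrite -ephi sk_mvar // /swapn.
  case: (i =P k) => [->|ik]; first by exists 1; rewrite mulr1.
  case: (i =P k.+1) => [->|ik1]; first by exists (-1); rewrite mulrN1 opprB.
  by exists 0; rewrite subrr mulr0.
by exists g; rewrite -eg ephi.
Qed.

Lemma dd_uniq n k (f g : mpoly n) : (0 < k)%N -> (k < n)%N ->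
  (mvar n k - mvar n k.+1) * g = f - sk k f -> dd k f = g.
Proof.
move=> k0 kn e; have nz : mvar n k - mvar n k.+1 != 0.
  apply: mvar_neq; [lia|lia|]; by rewrite neq_ltn ltnSn.
by apply: (mulfI nz); rewrite dd_spec.
Qed.

Lemma skM n k (x y : mpoly n) : sk k (x * y) = sk k x * sk k y.
Proof. have [phi e] := sk_rm n k; rewrite !e; exact: rmorphM. Qed.
Lemma skB n k (x y : mpoly n) : sk k (x - y) = sk k x - sk k y.
Proof. have [phi e] := sk_rm n k; rewrite !e; exact: rmorphB. Qed.

Lemma braid_alg (R : comRingType) (a b c h h2 h12 u u1 v v2 u2 u21 : R) :
  (b-c)*u = h - h2 -> (a-c)*u1 = h - h12 -> (a-b)*v = u - u1 ->
  (a-c)*v2 = u2 - u21 -> (c-b)*u2 = h2 - h -> (a-b)*u21 = h2 - h12 ->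
  (a-b)*(b-c)*(a-c)*v2 = (a-b)*(b-c)*(a-c)*v.
Proof.
move=> E1 E2 E3 E4 E5 E6; apply/eqP; rewrite -subr_eq0; apply/eqP.
transitivity ((a-b)*(b-c)*((a-c)*v2 - (u2 - u21)) - (a-b)*((c-b)*u2 - (h2 - h))
  - (b-c)*((a-b)*u21 - (h2-h12)) - (b-c)*(a-c)*((a-b)*v - (u-u1))
  - (a-c)*((b-c)*u - (h-h2)) + (b-c)*((a-c)*u1 - (h-h12))); first by ring.
by rewrite E1 E2 E3 E4 E5 E6 !subrr; ring.
Qed.

Lemma dd_fix n k (f : mpoly n) : (0 < k)%N -> (k < n)%N -> sk k f = f -> dd k f = 0.
Proof. by move=> k0 kn e; apply: dd_uniq => //; rewrite e subrr mulr0. Qed.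

Lemma sk_dd n k (f : mpoly n) : (0 < k)%N -> (k < n)%N -> sk k (dd k f) = dd k f.
Proof.
move=> k0 kn; have nz : mvar n k - mvar n k.+1 != 0.
  apply: mvar_neq; [lia|lia|]; by rewrite neq_ltn ltnSn.
apply: (mulfI nz); apply: oppr_inj.
have e1 : sk k (mvar n k - mvar n k.+1) = - (mvar n k - mvar n k.+1).
  rewrite skB !sk_mvar ?opprB; try lia.
  by congr (mvar n _ - mvar n _); swap_solve.
by rewrite -mulNr -e1 -skM dd_spec // skB skK // opprB.
Qed.

Lemma sk_dd_comm n k m (f : mpoly n) : (0 < k)%N -> (k < n)%N -> (0 < m)%N -> (m < n)%N ->
  (k.+1 < m)%N || (m.+1 < k)%N -> sk k (dd m f) = dd m (sk k f).
Proof.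
move=> k0 kn m0 mn hkm; symmetry; apply: dd_uniq => //.
have e1 : sk k (mvar n m - mvar n m.+1) = mvar n m - mvar n m.+1.
  rewrite skB !sk_mvar; try lia.
  by congr (mvar n _ - mvar n _); swap_solve.
rewrite -e1 -skM dd_spec // skB.
case/orP: hkm => h; first by rewrite sk_comm.
by rewrite (sk_comm f (k := m) (m := k)).
Qed.

Lemma dd_braid n j (h : mpoly n) : (0 < j)%N -> (j.+2 <= n)%N -> sk j h = h ->
  sk j.+1 (dd j (dd j.+1 h)) = dd j (dd j.+1 h).
Proof.
move=> j0 jn hs.
set u := dd j.+1 h; set v := dd j u.
set a := mvar n j; set b := mvar n j.+1; set c := mvar n j.+2.
have s1a : sk j a = b by rewrite /a sk_mvar; [congr (mvar n _); swap_solve|lia].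
have s1b : sk j b = a by rewrite /b sk_mvar; [congr (mvar n _); swap_solve|lia].
have s1c : sk j c = c by rewrite /c sk_mvar; [congr (mvar n _); swap_solve|lia].
have s2a : sk j.+1 a = a by rewrite /a sk_mvar; [congr (mvar n _); swap_solve|lia].
have s2b : sk j.+1 b = c by rewrite /b sk_mvar; [congr (mvar n _); swap_solve|lia].
have s2c : sk j.+1 c = b by rewrite /c sk_mvar; [congr (mvar n _); swap_solve|lia].
have E1 : (b - c) * u = h - sk j.+1 h by rewrite /u dd_spec //; lia.
have E2 : (a - c) * sk j u = h - sk j (sk j.+1 h).
  have -> : a - c = sk j (b - c) by rewrite skB s1b s1c.
  by rewrite -skM E1 skB hs.
have E3 : (a - b) * v = u - sk j u by rewrite /v dd_spec //; lia.
have E4 : (a - c) * sk j.+1 v = sk j.+1 u - sk j.+1 (sk j u).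
  have -> : a - c = sk j.+1 (a - b) by rewrite skB s2a s2b.
  by rewrite -skM E3 skB.
have E5 : (c - b) * sk j.+1 u = sk j.+1 h - h.
  have -> : c - b = sk j.+1 (b - c) by rewrite skB s2b s2c.
  rewrite -skM E1 skB skK //; lia.
have E6 : (a - b) * sk j.+1 (sk j u) = sk j.+1 h - sk j (sk j.+1 h).
  have -> : a - b = sk j.+1 (a - c) by rewrite skB s2a s2c.
  rewrite -skM E2 skB; congr (_ - _).
  by rewrite -sk_braid // hs.
have := braid_alg E1 E2 E3 E4 E5 E6.
have nz : (a - b) * (b - c) * (a - c) != 0.
  rewrite !mulf_neq0 // /a /b /c; apply: mvar_neq; try lia;
  by rewrite neq_ltn ltnS ?leqnn ?ltnSn ?orbT ?leqnSn.
by move/(mulfI nz).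
Qed.

Lemma homog0 n (f : mpoly n) : homog 0 f -> exists c, f = ratr c.
Proof.
elim: n f => [|n IH] f.
  by move=> _; exists f; rewrite -(fmorph_eq_rat idfun f).
change ({poly mpoly n}) in f; move=> /= /forallP H.
have sf : (size f <= 1)%N.
  rewrite leqNgt; apply/negP => s2.
  have lt : ((size f).-1 < size f)%N by rewrite prednK //; lia.
  have := H (Ordinal lt); rewrite /= ifN; last by rewrite -ltnNge -ltnS prednK // ltnW.
  move/eqP; apply/eqP; rewrite -lead_coefE lead_coef_eq0 -size_poly_eq0; lia.
case: (posnP (size f)) => [/eqP|s0].
  by rewrite size_poly_eq0 => /eqP ->; exists 0; have := ratr_int {poly mpoly n} 0; rewrite !mulr0z => ->.
have := H (Ordinal s0) => /= /IH [c ec].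
exists c; rewrite [f]size1_polyC // ec.
exact: (rm_ratr (@polyC (mpoly n)) c).
Qed.

Lemma dc_n n (f : mpoly n) : dc n f = f.
Proof. by rewrite /dc subnn. Qed.

Lemma dc_S n J (f : mpoly n) : (J < n)%N -> dc J f = dd J (dc J.+1 f).
Proof. by move=> Jn; rewrite /dc; have -> : (n - J = (n - J.+1).+1)%N by lia. Qed.

Definition symb n (f : mpoly n) := forall m, (0 < m)%N -> (m.+2 <= n)%N -> sk m f = f.

Lemma dc_high n (f : mpoly n) k J : symb f -> (0 < k)%N -> (k.+2 <= J)%N -> (J <= n)%N ->
  sk k (dc J f) = dc J f.
Proof.
move=> sf k0; move Hd : (n - J)%N => d; elim: d J Hd => [|d IH] J Hd kJ Jn.
  have -> : J = n by lia.
  by rewrite dc_n sf //; lia.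
rewrite dc_S; last lia.
rewrite sk_dd_comm; try lia.
by rewrite IH //; lia.
Qed.

Lemma dc_low n (f : mpoly n) k J : symb f -> (0 < J)%N -> (J <= k)%N -> (k < n)%N ->
  sk k (dc J f) = dc J f.
Proof.
move=> sf J0; move Hd : (n - J)%N => d; elim: d J J0 Hd => [|d IH] J J0 Hd Jk kn.
  lia.
rewrite dc_S; last lia.
case: (ltngtP k J.+1) => hk.
- have -> : k = J by lia.
  by rewrite sk_dd //; lia.
- rewrite sk_dd_comm; try lia.
  by rewrite IH //; lia.
- rewrite -hk in kn *; rewrite dc_S; last lia.
  rewrite hk; apply: dd_braid; try lia.
  by apply: dc_high => //; lia.
Qed.

Lemma dd_dc n (f : mpoly n) k J : symb f -> (0 < k)%N -> (k < n)%N -> (0 < J <= n)%N ->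
  dd k (dc J f) = if J == k.+1 then dc k f else 0.
Proof.
move=> sf k0 kn /andP[J0 Jn]; case: eqP => [->|nJ].
  by rewrite [dc k f]dc_S.
case: (ltnP k J) => hJ.
  by apply: dd_fix => //; apply: dc_high => //; lia.
by apply: dd_fix => //; apply: dc_low.
Qed.

Lemma entry1E (R : nzRingType) m n (A : 'M[R]_(m, n)) i c (hc : (c.-1 < n)%N) :
  (0 < c)%N -> entry1 A i c = A i (Ordinal hc).
Proof.
move=> c0; rewrite /entry1 (big_pred1 (Ordinal hc)) // => l /=.
apply/eqP/eqP => [e|->]; first by apply: val_inj; rewrite /= -e.
by rewrite /= prednK.
Qed.

Lemma ratr0' (R : unitRingType) : ratr 0 = 0 :> R.
Proof. by have := ratr_int R 0; rewrite !mulr0z. Qed.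

Theorem lemma4p1 (n : nat) :
  (* (i) *)
  (forall p : 'I_n -> mpoly n, admissible p ->
     let P : 'M[mpoly n]_n := \matrix_(i, j) dc j.+1 (p i) in
     forall k : nat, (1 <= k)%N -> (k <= n.-1)%N ->
       map_mx (dd k) P = gamma k P)
  /\
  (* (ii) *)
  (forall Q : 'M[mpoly n]_n,
     Q \in unitmx ->
     (forall i j : 'I_n,
        if (i <= j)%N then homog (j - i) (Q i j) else Q i j == 0) ->
     (forall k : nat, (1 <= k)%N -> (k <= n.-1)%N ->
        map_mx (dd k) Q = gamma k Q) ->
     forall last : 'I_n, last.+1 = n ->
       admissible (fun i => Q i last) /\
       (forall i j : 'I_n, Q i j = dc j.+1 (Q i last))).
Proof.
split.
  move=> p adm P k k1 kn.
  have nk : (k < n)%N by lia.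
  apply/matrixP => i j; rewrite /P !mxE.
  have sf : symb (p i).
    case: (adm i) => sym _ _ m m0 mn; apply: sym => //; lia.
  rewrite dd_dc //; last by rewrite /= ltn_ord.
  case: ifP => // _.
  have hc : (k.-1 < n)%N by lia.
  by rewrite (entry1E _ _ hc) // mxE /= prednK.
move=> Q Qu Qh Qd last hl.
have key : forall i j : 'I_n, Q i j = dc j.+1 (Q i last).
  move=> i j; move Hd : (n - j.+1)%N => d; elim: d j Hd => [|d IH] j Hd.
    have -> : j = last by apply: ord_inj; have := ltn_ord j; lia.
    by rewrite hl dc_n.
  have hj : (j.+1 < n)%N by lia.
  rewrite dc_S // -(IH (Ordinal hj)) /=; last lia.
  have := congr1 (fun M : 'M[mpoly n]_n => M i (Ordinal hj)) (Qd j.+1 (ltn0Sn _) _).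
  rewrite !mxE /= eqxx (@entry1E _ _ _ Q i j.+1 (ltn_ord j)) //.
  have -> : Ordinal (ltn_ord j) = j by apply: ord_inj.
  by move=> ->; [|lia].
split => //.
move=> i; split.
- move=> k k1 kn2.
  have := congr1 (fun M : 'M[mpoly n]_n => M i last) (Qd k k1 _).
  rewrite !mxE ifN; last by rewrite eqSS; apply/eqP; lia.
  move=> /(_ ltac:(lia)) e.
  have := @dd_spec n k (Q i last) ltac:(lia) ltac:(lia).
  by rewrite e mulr0 => /esym/subr0_eq/esym.
- have := Qh i last; rewrite ifT; last by have := ltn_ord i; lia.
  by have -> : (last - i = n - i.+1)%N by lia.
- rewrite -key; have := Qh i i; rewrite leqnn subnn => /homog0 [c ec].
  exists c; split => //; apply/eqP => c0.
  move: Qu; rewrite unitmxE -det_tr det_trig.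
    by rewrite (bigD1 i) //= mxE ec c0 ratr0' mul0r unitr0.
  apply/is_trig_mxP => a b ab; rewrite mxE.
  by have := Qh b a; rewrite leqNgt ab /= => /eqP.
Qed.
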